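(* Let $\mathcal{X}=\{1,\dots,n\}$, let $\pi$ be a strictly positive probability distribution on $\mathcal{X}$, let $P$ be a $\pi$-reversible transition matrix, let $G$ be the Gibbs kernel induced by a partition $\mathcal{X}=\bigsqcup_{i=1}^k\mathcal{O}_i$, and for $\alpha\in[0,1]$ let $A_\alpha=\alpha P+(1-\alpha)G$. Assume the partition is such that $\operatorname{Tr}(\overline{P})=0$. Then $\operatorname*{argmin}_{\alpha\in[0,1]}\|A_\alpha-\Pi\|_{F,\pi}^2=\{\alpha^*\}$ with $\alpha^*=\dfrac{k}{\operatorname{Tr}(P^2)+k}$.
   Context: $\pi$-reversible means $\pi(x)P(x,y)=\pi(y)P(y,x)$. Gibbs kernel: $G(x,y)=\pi(y)/\pi(\mathcal{O}(x))$ if $y\in\mathcal{O}(x)$ and $0$ otherwise, $\mathcal{O}(x)$ the block containing $x$, $\pi(\mathcal{O})=\sum_{z\in\mathcal{O}}\pi(z)$. Projection chain: $\overline{P}(i,j)=\frac{1}{\pi(\mathcal{O}_i)}\sum_{x\in\mathcal{O}_i,\,y\in\mathcal{O}_j}\pi(x)P(x,y)$. $\Pi$ is the matrix with every row equal to $\pi$; $\|M\|_{F,\pi}^2=\operatorname{Tr}(M^*M)$ with $M^*(x,y)=\pi(y)M(y,x)/\pi(x)$. *)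

(* Defs.v *)
From mathcomp Require Import all_boot all_order all_algebra.
Set Implicit Arguments. Unset Strict Implicit. Unset Printing Implicit Defensive.
Import Order.TTheory GRing.Theory Num.Theory.
Local Open Scope ring_scope.

Definition prob_dist (R : realFieldType) (n : nat) (pi : 'I_n -> R) : Prop :=
  (forall x, 0 < pi x) /\ \sum_x pi x = 1.

Definition transition_matrix (R : realFieldType) (n : nat) (P : 'M[R]_n) : Prop :=
  (forall x y, 0 <= P x y) /\ (forall x, \sum_y P x y = 1).

Definition reversible (R : realFieldType) (n : nat) (pi : 'I_n -> R) (P : 'M[R]_n) : Prop :=
  forall x y, pi x * P x y = pi y * P y x.

(* A partition of 'I_n into k nonempty blocks O_1..O_k, given by the block
   map blk : x |-> index of the block containing x (surjective). *)
Definition partition_map (n k : nat) (blk : 'I_n -> 'I_k) : Prop :=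
  forall i : 'I_k, exists x, blk x = i.

Definition block_mass (R : realFieldType) (n k : nat) (pi : 'I_n -> R)
  (blk : 'I_n -> 'I_k) (i : 'I_k) : R :=
  \sum_(z | blk z == i) pi z.

Definition gibbs_kernel (R : realFieldType) (n k : nat) (pi : 'I_n -> R)
  (blk : 'I_n -> 'I_k) : 'M[R]_n :=
  \matrix_(x, y) (if blk y == blk x then pi y / block_mass pi blk (blk x) else 0).

Definition proj_chain (R : realFieldType) (n k : nat) (pi : 'I_n -> R)
  (blk : 'I_n -> 'I_k) (P : 'M[R]_n) : 'M[R]_k :=
  \matrix_(i, j) ((block_mass pi blk i)^-1 *
     \sum_(x | blk x == i) \sum_(y | blk y == j) pi x * P x y).

Definition Pi_mat (R : realFieldType) (n : nat) (pi : 'I_n -> R) : 'M[R]_n :=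
  \matrix_(x, y) pi y.

Definition pi_adj (R : realFieldType) (n : nat) (pi : 'I_n -> R) (M : 'M[R]_n) : 'M[R]_n :=
  \matrix_(x, y) (pi y * M y x / pi x).

Definition frob_pi_sq (R : realFieldType) (n : nat) (pi : 'I_n -> R) (M : 'M[R]_n) : R :=
  \tr (pi_adj pi M *m M).

(* Main.v *)
Require Import Defs.
From mathcomp Require Import all_boot all_order all_algebra.
From mathcomp Require Import ring lra.
Import Order.TTheory GRing.Theory Num.Theory.
Local Open Scope ring_scope.

Section H.
Variables (R : realFieldType) (n k : nat) (pi : 'I_n -> R) (P : 'M[R]_n) (blk : 'I_n -> 'I_k).
Hypothesis pipos : forall x, 0 < pi x.
Hypothesis pisum : \sum_x pi x = 1.
Hypothesis Prow : forall x, \sum_y P x y = 1.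
Hypothesis surj : partition_map blk.

Local Notation m := (block_mass pi blk).

Lemma frobE M : frob_pi_sq pi M = \sum_x \sum_y pi y * M y x / pi x * M y x.
Proof.
rewrite /frob_pi_sq /mxtrace; apply: eq_bigr => x _; rewrite mxE.
by apply: eq_bigr => y _; rewrite !mxE.
Qed.

Lemma m_pos i : 0 < m i.
Proof.
have [x hx] := surj i.
rewrite /block_mass (bigD1 x) /=; last by rewrite hx.
apply: ltr_pwDl; first exact: pipos.
by apply: sumr_ge0 => y _; apply/ltW.
Qed.

Lemma m_neq0 i : m i != 0.
Proof. by rewrite gt_eqF // m_pos. Qed.

Lemma pi_neq0 x : pi x != 0.
Proof. by rewrite gt_eqF // pipos. Qed.

Lemma part_sum (f : 'I_n -> R) :
  \sum_y f y = \sum_(i < k) \sum_(y | blk y == i) f y.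
Proof. by rewrite (partition_big blk predT) //. Qed.

Lemma sum_pi_m : \sum_y pi y / m (blk y) = k%:R.
Proof.
rewrite part_sum.
transitivity (\sum_(i < k) (1 : R)); last by rewrite sumr_const card_ord.
apply: eq_bigr => i _.
transitivity (\sum_(y | blk y == i) pi y / m i).
  apply: eq_bigr => y /eqP hy. by rewrite hy.
by rewrite -mulr_suml divff // m_neq0.
Qed.

Lemma cond_sum y (g : 'I_n -> R) :
  \sum_x (if blk x == blk y then g x else 0) = \sum_(x | blk x == blk y) g x.
Proof. by rewrite [RHS]big_mkcond. Qed.

Definition Gm := gibbs_kernel pi blk.

Lemma GE y x : Gm y x = if blk x == blk y then pi x / m (blk y) else 0.
Proof. by rewrite /Gm /gibbs_kernel mxE. Qed.

Lemma SGG : \sum_x \sum_y pi y * Gm y x / pi x * Gm y x = k%:R.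
Proof.
rewrite exchange_big /= -sum_pi_m; apply: eq_bigr => y _.
transitivity (\sum_x (if blk x == blk y then pi y / (m (blk y))^+2 * pi x else 0)).
  apply: eq_bigr => x _; rewrite GE; case: ifP => _; last by rewrite !mulr0.
  by field; rewrite pi_neq0 m_neq0.
rewrite cond_sum -mulr_sumr.
have := m_neq0 (blk y); rewrite /block_mass => h.
by field.
Qed.

Lemma SGpi : \sum_x \sum_y pi y * Gm y x / pi x * pi x = 1.
Proof.
rewrite exchange_big /= -pisum; apply: eq_bigr => y _.
transitivity (\sum_x (if blk x == blk y then pi y / m (blk y) * pi x else 0)).
  apply: eq_bigr => x _; rewrite GE; case: ifP => _; last by rewrite mulr0 mul0r mul0r.
  by field; rewrite pi_neq0 m_neq0.
rewrite cond_sum -mulr_sumr.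
have := m_neq0 (blk y); rewrite /block_mass => h.
by field.
Qed.

Lemma Spipi : \sum_x \sum_y pi y * pi x / pi x * pi x = 1.
Proof.
transitivity (\sum_x pi x * \sum_y pi y); last by rewrite pisum -mulr_suml pisum mulr1.
apply: eq_bigr => x _; rewrite mulr_sumr; apply: eq_bigr => y _.
by field; rewrite pi_neq0.
Qed.

Lemma SPpi : \sum_x \sum_y pi y * P y x / pi x * pi x = 1.
Proof.
rewrite exchange_big /= -pisum; apply: eq_bigr => y _.
transitivity (pi y * \sum_x P y x); last by rewrite Prow mulr1.
rewrite mulr_sumr; apply: eq_bigr => x _.
by field; rewrite pi_neq0.
Qed.

Lemma SPG : \sum_x \sum_y pi y * P y x / pi x * Gm y x = \tr (proj_chain pi blk P).
Proof.
rewrite exchange_big /= /mxtrace part_sum; apply: eq_bigr => i _; rewrite mxE.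
rewrite mulr_sumr; apply: eq_bigr => y /eqP hy.
rewrite mulr_sumr [RHS]big_mkcond; apply: eq_bigr => x _; rewrite GE hy.
case: ifP => _; last by rewrite mulr0.
by field; rewrite pi_neq0 m_neq0.
Qed.

Lemma SPP : reversible pi P -> \sum_x \sum_y pi y * P y x / pi x * P y x = \tr (P *m P).
Proof.
move=> rev; rewrite /mxtrace; apply: eq_bigr => x _; rewrite mxE; apply: eq_bigr => y _.
rewrite (rev y x); by field; rewrite pi_neq0.
Qed.

Lemma sum6 (c1 c2 c3 c4 c5 c6 : R) (f1 f2 f3 f4 f5 f6 : 'I_n -> 'I_n -> R) :
  \sum_x \sum_y (c1 * f1 x y + c2 * f2 x y + c3 * f3 x y + c4 * f4 x y + c5 * f5 x y + c6 * f6 x y)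
  = c1 * (\sum_x \sum_y f1 x y) + c2 * (\sum_x \sum_y f2 x y) + c3 * (\sum_x \sum_y f3 x y)
  + c4 * (\sum_x \sum_y f4 x y) + c5 * (\sum_x \sum_y f5 x y) + c6 * (\sum_x \sum_y f6 x y).
Proof.
under eq_bigr => x _ do rewrite !big_split /= -!mulr_sumr.
by rewrite !big_split /= -!mulr_sumr.
Qed.

Lemma Fval : reversible pi P -> \tr (proj_chain pi blk P) = 0 -> forall a : R,
  frob_pi_sq pi (a *: P + (1 - a) *: Gm - Pi_mat pi) = a^+2 * \tr (P *m P) + (1 - a)^+2 * k%:R - 1.
Proof.
move=> rev tr0 a; rewrite frobE.
transitivity (\sum_x \sum_y (a^+2 * (pi y * P y x / pi x * P y x)
   + (1 - a)^+2 * (pi y * Gm y x / pi x * Gm y x)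
   + 1 * (pi y * pi x / pi x * pi x)
   + (2 * a * (1 - a)) * (pi y * P y x / pi x * Gm y x)
   + (- 2 * a) * (pi y * P y x / pi x * pi x)
   + (- 2 * (1 - a)) * (pi y * Gm y x / pi x * pi x))).
  apply: eq_bigr => x _; apply: eq_bigr => y _; rewrite /Pi_mat !mxE; ring.
rewrite sum6 SPP // SGG SPG tr0 Spipi SPpi SGpi; ring.
Qed.
End H.

Theorem proposition4p7 (R : realFieldType) (n k : nat) (pi : 'I_n -> R)
  (P : 'M[R]_n) (blk : 'I_n -> 'I_k) :
  prob_dist pi -> transition_matrix P -> reversible pi P ->
  partition_map blk ->
  \tr (proj_chain pi blk P) = 0 ->
  let G := gibbs_kernel pi blk in
  let F := fun a : R => frob_pi_sq pi (a *: P + (1 - a) *: G - Pi_mat pi) in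
  let astar := k%:R / (\tr (P *m P) + k%:R) in
  forall a : R,
    ((0 <= a <= 1) /\ (forall b : R, 0 <= b <= 1 -> F a <= F b)) <-> a = astar.
Proof.
move=> [pipos pisum] [Pnn Prow] rev surj tr0 G F astar a.
have hk : (0 < k)%N.
  case: (posnP k) => // k0; exfalso; subst k; move: pisum.
  rewrite big1; last by move=> x _; case: (blk x).
  by move/eqP; rewrite eq_sym oner_eq0.
set T := \tr (P *m P).
have T0 : 0 <= T.
  rewrite /T -(@SPP _ _ _ _ pipos rev); apply: sumr_ge0 => x _; apply: sumr_ge0 => y _.
  rewrite -mulrA mulr_ge0 ?mulr_ge0 ?invr_ge0 ?Pnn ?ltW ?pipos //.
have kpos : 0 < (k%:R : R) by rewrite ltr0n.
have spos : 0 < T + k%:R by lra.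
have Fe : forall b, F b = (T + k%:R) * (b - astar)^+2 + (k%:R - k%:R^+2 / (T + k%:R) - 1).
  move=> b; rewrite /F /G (@Fval _ _ _ _ _ _ pipos pisum Prow surj rev tr0) -/T /astar.
  by field; rewrite gt_eqF.
have a01 : 0 <= astar <= 1.
  rewrite /astar -/T; apply/andP; split; first by rewrite divr_ge0 // ltW.
  by rewrite ler_pdivrMr // mul1r; lra.
have key : forall b, F astar <= F b.
  move=> b; rewrite !Fe subrr expr0n /= mulr0 add0r lerDr.
  by rewrite mulr_ge0 ?sqr_ge0 // ltW.
split.
  move=> [_ h]; have h2 := h astar a01; rewrite !Fe subrr expr0n /= mulr0 add0r in h2.
  have h4 : (T + k%:R) * (a - astar) ^+ 2 <= 0 by lra.
  have h3 : (a - astar)^+2 = 0.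
    apply/eqP; rewrite eq_le sqr_ge0 andbT.
    by rewrite -(pmulr_rle0 _ spos).
  by move/eqP: h3; rewrite sqrf_eq0 subr_eq0 => /eqP.
by move=> ->; split => // b _; exact: key.
Qed.
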